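(* Let $\theta\in\mathrm{Irr}(N)$. Then $K_{\tilde\theta}=\mathrm{Stab}_G(\theta)$ is a normal subgroup of $L_{\tilde\theta}=\mathrm{Stab}_G(\tilde\theta)$.
   Context: $G$ is a profinite group and $N$ is an open normal subgroup of $G$. $\mathrm{Irr}(H)$ denotes the continuous irreducible complex characters of $H$ and $\mathrm{Lin}(H)$ the continuous degree-one characters. For $H\le G$, $\lambda,\delta\in\mathrm{Irr}(H)$ are $G$-twist equivalent if $\lambda=\delta\,\psi|_H$ for some $\psi\in\mathrm{Lin}(G)$; $\tilde\theta$ denotes the $G$-twist class of $\theta$. $G$ acts on $\mathrm{Irr}(N)$ by ${}^g\theta(n)=\theta(g^{-1}ng)$, and this induces an action $g\cdot\tilde\theta=\widetilde{{}^g\theta}$ on $G$-twist classes of $\mathrm{Irr}(N)$. $K_{\tilde\theta}=\mathrm{Stab}_G(\theta)$ (which depends only on $\tilde\theta$) and $L_{\tilde\theta}=\mathrm{Stab}_G(\tilde\theta)$. *)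

(* Defs.v *)
From HB Require Import structures.
From mathcomp Require Import all_boot all_order all_algebra all_field.
From mathcomp Require Import boolp classical_sets topology.
Set Implicit Arguments. Unset Strict Implicit. Unset Printing Implicit Defensive.
Import GRing.Theory.
Local Open Scope classical_set_scope.
Local Open Scope ring_scope.

Definition group_axioms (T : Type) (mul : T -> T -> T) (inv : T -> T) (one : T) : Prop :=
  [/\ forall x y z, mul x (mul y z) = mul (mul x y) z,
      forall x, mul one x = x, forall x, mul x one = x,
      forall x, mul (inv x) x = one & forall x, mul x (inv x) = one].

Definition profinite_group (T : topologicalType) (mul : T -> T -> T) (inv : T -> T) (one : T) : Prop :=
  [/\ group_axioms mul inv one,
      continuous (fun p : T * T => mul p.1 p.2),
      continuous inv &
      [/\ compact [set: T], hausdorff_space T & totally_disconnected [set: T]]].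

Definition is_subgroup (T : Type) (mul : T -> T -> T) (inv : T -> T) (one : T) (H : set T) : Prop :=
  [/\ H one, forall x y, H x -> H y -> H (mul x y) & forall x, H x -> H (inv x)].

Definition is_normal_subgroup_of (T : Type) (mul : T -> T -> T) (inv : T -> T) (one : T) (H L : set T) : Prop :=
  [/\ is_subgroup mul inv one H, is_subgroup mul inv one L, H `<=` L &
      forall g h, L g -> H h -> H (mul (mul g h) (inv g))].

(* A continuous complex representation of degree n of the subgroup H:
   a homomorphism H -> GL_n(C) which is continuous; for (the open subgroups of)
   a profinite group this is the same as having an open kernel. *)
Definition cont_rep (T : topologicalType) (mul : T -> T -> T) (one : T) (H : set T)
  (n : nat) (rho : T -> 'M[algC]_n) : Prop :=
  [/\ rho one = 1%:M,
      forall x y, H x -> H y -> rho (mul x y) = rho x *m rho y &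
      open [set x | H x /\ rho x = 1%:M]].

Definition irr_rep (T : Type) (H : set T) (n : nat) (rho : T -> 'M[algC]_n) : Prop :=
  (0 < n)%N /\
  forall U : 'M[algC]_n, (forall x, H x -> (U *m rho x <= U)%MS) ->
    (U == (0 : 'M[algC]_n))%MS \/ (U == (1%:M : 'M[algC]_n))%MS.

Definition is_Irr (T : topologicalType) (mul : T -> T -> T) (one : T) (H : set T)
  (theta : T -> algC) : Prop :=
  exists n (rho : T -> 'M[algC]_n),
    [/\ cont_rep mul one H rho, irr_rep H rho & forall x, H x -> theta x = \tr (rho x)].

Definition is_Lin (T : topologicalType) (mul : T -> T -> T) (one : T) (H : set T)
  (psi : T -> algC) : Prop :=
  exists rho : T -> 'M[algC]_1,
    cont_rep mul one H rho /\ forall x, H x -> psi x = \tr (rho x).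

Definition twist_equiv (T : topologicalType) (mul : T -> T -> T) (one : T) (H : set T)
  (lam del : T -> algC) : Prop :=
  exists psi, is_Lin mul one [set: T] psi /\ forall x, H x -> lam x = del x * psi x.

Definition conj_char (T : Type) (mul : T -> T -> T) (inv : T -> T)
  (g : T) (theta : T -> algC) : T -> algC :=
  fun n => theta (mul (mul (inv g) n) g).

Definition stab_char (T : Type) (mul : T -> T -> T) (inv : T -> T) (N : set T)
  (theta : T -> algC) : set T :=
  [set g | forall n, N n -> conj_char mul inv g theta n = theta n].

(* L_{~theta} = Stab_G(~theta): g . ~theta = ~theta, i.e. ^g theta is
   G-twist equivalent to theta. *)
Definition stab_twist_class (T : topologicalType) (mul : T -> T -> T) (inv : T -> T) (one : T)
  (N : set T) (theta : T -> algC) : set T :=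
  [set g | twist_equiv mul one N (conj_char mul inv g theta) theta].

(* Main.v *)
Require Import Defs.
From HB Require Import structures.
From mathcomp Require Import all_boot all_order all_algebra all_field.
From mathcomp Require Import boolp classical_sets topology.
Set Warnings "-notation-overridden -ambiguous-paths".
Import GRing.Theory.
Local Open Scope classical_set_scope.
Local Open Scope ring_scope.

Lemma scal11 (a b : algC) : ((a%:M : 'M_1) = b%:M)%R -> a = b.
Proof. by move/(congr1 (fun A : 'M_1 => A 0 0)); rewrite !mxE. Qed.
Lemma tr11 (a : algC) : \tr (a%:M : 'M_1) = a.
Proof. by rewrite mxtrace_scalar. Qed.

Definition linc (T : Type) (mul : T -> T -> T) (one : T) (psi : T -> algC) (opn : set T -> Prop) :=
  [/\ psi one = 1%R, forall x y, psi (mul x y) = (psi x * psi y)%R &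
      opn [set x | psi x = 1%R]].

Arguments linc {T}.

Lemma linE (T : topologicalType) (mul : T -> T -> T) (one : T) psi :
  is_Lin mul one [set: T] psi -> linc mul one psi open.
Proof.
move=> [rho [[r1 rM rO] pE]].
have rE x : rho x = (psi x)%:M by rewrite pE // {1}(mx11_scalar (rho x)) /mxtrace big_ord1.
split.
- by rewrite pE // r1 tr11.
- by move=> x y; rewrite pE // rM // !rE -scalar_mxM tr11.
- suff -> : [set x | psi x = 1%R] = [set x | [set: T] x /\ rho x = 1%:M] by [].
  apply/seteqP; split=> x /=.
    by move=> px; split=> //; rewrite rE px.
  by move=> [_]; rewrite rE => /scal11.
Qed.

Lemma linI (T : topologicalType) (mul : T -> T -> T) (one : T) psi :
  linc mul one psi open -> is_Lin mul one [set: T] psi.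
Proof.
move=> [p1 pM pO]; exists (fun x => (psi x)%:M); split; last by move=> x _; rewrite tr11.
split.
- by rewrite p1.
- by move=> x y _ _; rewrite pM scalar_mxM.
- suff <- : [set x | psi x = 1%R] = [set x | [set: T] x /\ (psi x)%:M = 1%:M :> 'M_1] by [].
  apply/seteqP; split=> x /=.
    by move=> px; split=> //; rewrite px.
  by move=> [_] /scal11.
Qed.

Theorem lemma2p3 (T : topologicalType) (mul : T -> T -> T) (inv : T -> T) (one : T)
  (N : set T) (theta : T -> algC) :
  profinite_group mul inv one ->
  is_subgroup mul inv one N -> open N ->
  (forall g n, N n -> N (mul (mul g n) (inv g))) ->
  is_Irr mul one N theta ->
  is_normal_subgroup_of mul inv one (stab_char mul inv N theta)
    (stab_twist_class mul inv one N theta).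
Proof.
move=> [[mA m1x mx1 mVx mxV] cmul cinv _] [N1 NM NV] _ Nconj _.
have invU a b : mul a b = one -> b = inv a.
  by move=> ab; rewrite -[b]m1x -(mVx a) -mA ab mx1.
have invK x : inv (inv x) = x by apply/esym/invU; rewrite mVx.
have inv1 : inv one = one by apply/esym/invU; rewrite m1x.
have invM x y : inv (mul x y) = mul (inv y) (inv x).
  by apply/esym/invU; rewrite mA -(mA x) mxV mx1 mxV.
pose c g n := mul (mul (inv g) n) g.
have cE g f n : conj_char mul inv g f n = f (c g n) by [].
have cN g n : N n -> N (c g n).
  by move=> Nn; have := Nconj (inv g) n Nn; rewrite invK.
have c1 n : c one n = n by rewrite /c inv1 m1x mx1.
have cM g h n : c (mul g h) n = c h (c g n) by rewrite /c invM !mA.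
have cV g n : c (inv g) (c g n) = n.
  by rewrite /c invK -!mA mxV mx1 !mA mxV m1x.
have cVV g n : c g (c (inv g) n) = n by rewrite -{1}(invK g) cV.
have lin_c psi a x : linc mul one psi open -> psi (c a x) = psi x.
  move=> [p1 pM _]; rewrite /c !pM mulrAC -pM mVx p1 mul1r //.
have lin_1 : linc mul one (fun _ => 1%R) open.
  split=> //; first by move=> *; rewrite mulr1.
  have -> : [set x : T | (1 : algC) = 1] = setT by apply/seteqP; split.
  exact: openT.
have contl a : continuous (fun y => mul a y).
  move=> y.
  apply: (@continuous_comp _ _ _ (fun y => (a, y)) (fun p => mul p.1 p.2) y _ (cmul (a, y))).
  by apply: cvg_pair; [exact: cvg_cst | exact: cvg_id].
have lin_inv psi : linc mul one psi open -> linc mul one (fun x => psi (inv x)) open.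
  move=> [p1 pM pO]; split.
  - by rewrite inv1.
  - by move=> x y; rewrite invM pM mulrC.
  - have -> : [set x | psi (inv x) = 1%R] = inv @^-1` [set x | psi x = 1%R] by [].
    by apply: open_comp => // x _; exact: cinv.
have lin_mul p q : linc mul one p open -> linc mul one q open ->
    linc mul one (fun x => p x * q x)%R open.
  move=> [p1 pM pO] [q1 qM qO]; split.
  - by rewrite p1 q1 mulr1.
  - by move=> x y; rewrite pM qM mulrACA.
  - rewrite openE => x /= Hx; rewrite /interior.
    pose V := (fun y => mul (inv x) y) @^-1` ([set y | p y = 1%R] `&` [set y | q y = 1%R]).
    have oV : open V by apply: open_comp; [move=> y _; exact: contl | exact: openI].
    have Vx : V x by rewrite /V /= mVx p1 q1.
    apply: (filterS _ (open_nbhs_nbhs (conj oV Vx))) => y [/= py qy].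
    have ey : y = mul x (mul (inv x) y) by rewrite mA mxV m1x.
    by rewrite ey pM qM py qy !mulr1.
pose L := stab_twist_class mul inv one N theta.
pose K := stab_char mul inv N theta.
have LP g : L g <-> exists psi, linc mul one psi open /\
    forall n, N n -> theta (c g n) = (theta n * psi n)%R.
  split.
    by move=> [psi [/linE lp H]]; exists psi; split=> // n Nn; rewrite -cE H.
  by move=> [psi [/linI lp H]]; exists psi; split=> // n Nn; rewrite cE H.
have L1 : L one by apply/LP; exists (fun _ => 1%R); split=> // n _; rewrite c1 mulr1.
have LM g h : L g -> L h -> L (mul g h).
  move=> /LP [p [lp Hp]] /LP [q [lq Hq]]; apply/LP.
  exists (fun x => p x * q x)%R; split; first exact: lin_mul.
  move=> n Nn; rewrite cM Hq; last exact: cN.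
  by rewrite Hp // (lin_c q) // mulrA.
have LV g : L g -> L (inv g).
  move=> /LP [p [lp Hp]]; apply/LP.
  exists (fun x => p (inv x)); split; first exact: lin_inv.
  move=> n Nn; set m := c (inv g) n.
  have := Hp m (cN _ _ Nn); rewrite cVV /m (lin_c p) // => ->.
  case: lp => p1 pM _.
  by rewrite -mulrA -pM mxV p1 mulr1.
have K1 : K one by move=> n Nn; rewrite cE c1.
split.
- split.
  + exact: K1.
  + move=> g h Kg Kh n Nn; rewrite cE cM -cE Kh; last exact: cN.
    exact: Kg n Nn.
  + move=> g Kg n Nn; rewrite cE.
    by have := Kg _ (cN (inv g) n Nn); rewrite cE cVV => ->.
- by split.
- move=> g Kg; apply/LP; exists (fun _ => 1%R); split=> // n Nn.
  by rewrite -cE Kg // mulr1.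
- move=> g h Lg Kh n Nn.
  have -> : mul (mul g h) (inv g) = c (inv g) h by rewrite /c invK.
  rewrite cE !cM invK.
  have /LP [p [lp Hp]] := LV g Lg.
  rewrite Hp; last exact: (cN _ _ (cN _ _ Nn)).
  rewrite (lin_c p) //.
  have := Kh _ (cN g n Nn); rewrite cE => ->.
  by rewrite -Hp ?cV //; exact: cN.
Qed.
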